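(* Let $G$ be a reaction network with one-dimensional stoichiometric subspace. If for a total-constant vector $c^*\in\mathbb R^{s-1}$ the index set $\mathcal H$ is empty, then for any rate-constant vector $\kappa\in\mathbb R^m_{>0}$, $G$ has either no positive steady states or infinitely many positive steady states in $\mathcal P_{c^*}$.
   Context: A reaction network $G$ has species $X_1,\dots,X_s$ and $m$ reactions $\sum_{i}\alpha_{ij}X_i\to\sum_i\beta_{ij}X_i$, $\alpha_{ij},\beta_{ij}\in\mathbb Z_{\ge0}$, $(\alpha_{1j},\dots,\alpha_{sj})\neq(\beta_{1j},\dots,\beta_{sj})$. $\mathcal N$ has entries $\beta_{ij}-\alpha_{ij}$, $S=\mathrm{im}\,\mathcal N$. For $\kappa\in\mathbb R^m_{>0}$, $f(\kappa;x)=\mathcal N(\kappa_1\prod_i x_i^{\alpha_{i1}},\dots,\kappa_m\prod_i x_i^{\alpha_{im}})^\top$. Since $S$ is one-dimensional, species are labelled so that $\beta_{11}-\alpha_{11}\ne0$. For $c\in\mathbb R^{s-1}$, $\mathcal P_c=\{x\in\mathbb R^s_{\ge0}:(\beta_{i1}-\alpha_{i1})x_1-(\beta_{11}-\alpha_{11})x_i=c_{i-1},\ i=2,\dots,s\}$. A positive steady state is $x\in\mathbb R^s_{>0}$ with $f(\kappa;x)=0$. Notation for $c^*$: $A_1=1,B_1=0$, $A_i=\frac{\beta_{i1}-\alpha_{i1}}{\beta_{11}-\alpha_{11}}$, $B_i=-\frac{c^*_{i-1}}{\beta_{11}-\alpha_{11}}$ ($i\ge2$). $[i]=\{k:A_k\ne0,B_k/A_k=B_i/A_i\}$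 if $A_i\ne0$, $[i]=\{k:A_k=0\}$ otherwise; species labelled so that $1,\dots,r$ represent the $r$ distinct classes. $\varphi_k=\min_{1\le j\le m}\sum_{i\in[k]}\alpha_{ij}$, $\gamma_{kj}=\sum_{i\in[k]}\alpha_{ij}-\varphi_k$. $\mathcal J=\{i:A_i\neq0\}$, $\mathcal H=\{k\in\{1,\dots,r\}\cap\mathcal J:\gamma_{k1},\dots,\gamma_{km}\text{ are not all the same}\}$. *)

(* Defs.v *)
From HB Require Import structures.
From mathcomp Require Import all_boot all_order all_algebra.
Set Implicit Arguments. Unset Strict Implicit. Unset Printing Implicit Defensive.
Import Order.TTheory GRing.Theory Num.Theory.
Local Open Scope ring_scope.

(* Species are indexed by 'I_s.+1 (species "1" of the paper is ord0),
   reactions by 'I_m.+1 (reaction "1" of the paper is ord0).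
   alpha i j, beta i j : stoichiometric coefficients of species i in
   the reactant / product complex of reaction j. *)
Section Defs.
Variables (R : realFieldType) (s m : nat).
Variables (alpha beta : 'I_s.+1 -> 'I_m.+1 -> nat).

Definition stoich : 'M[R]_(s.+1, m.+1) :=
  \matrix_(i, j) ((beta i j)%:R - (alpha i j)%:R).

Definition ma_field (kappa : 'I_m.+1 -> R) (x : 'I_s.+1 -> R) (i : 'I_s.+1) : R :=
  \sum_(j < m.+1) stoich i j * (kappa j * \prod_(k < s.+1) x k ^+ alpha k j).

Definition positive_steady_state (kappa : 'I_m.+1 -> R) (x : 'I_s.+1 -> R) : Prop :=
  (forall i, 0 < x i) /\ (forall i, ma_field kappa x i = 0).

(* P_c, with c indexed by 'I_s: c i corresponds to species lift ord0 i *)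
Definition in_Pc (c : 'I_s -> R) (x : 'I_s.+1 -> R) : Prop :=
  (forall i, 0 <= x i) /\
  (forall i : 'I_s, stoich (lift ord0 i) ord0 * x ord0
                    - stoich ord0 ord0 * x (lift ord0 i) = c i).

Variable (c : 'I_s -> R).

Definition coefA (k : 'I_s.+1) : R :=
  if k == ord0 then 1 else stoich k ord0 / stoich ord0 ord0.

Definition coefB (k : 'I_s.+1) : R :=
  match unlift ord0 k with
  | None => 0
  | Some i => - (c i / stoich ord0 ord0)
  end.

Definition same_class (i k : 'I_s.+1) : bool :=
  if coefA i != 0 then (coefA k != 0) && (coefB k / coefA k == coefB i / coefA i)
  else coefA k == 0.

Definition class_sum (k : 'I_s.+1) (j : 'I_m.+1) : nat :=
  (\sum_(i < s.+1 | same_class k i) alpha i j)%N.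

Definition phi (k : 'I_s.+1) : nat :=
  \big[minn/class_sum k ord0]_(j < m.+1) class_sum k j.

Definition gamma (k : 'I_s.+1) (j : 'I_m.+1) : nat := (class_sum k j - phi k)%N.

(* class representatives: the least index in its class
   (the paper's labelling "1,...,r represent the r distinct classes") *)
Definition is_rep (k : 'I_s.+1) : bool :=
  [forall i : 'I_s.+1, same_class k i ==> (k <= i)%N].

Definition Hset : {set 'I_s.+1} :=
  [set k : 'I_s.+1 | [&& is_rep k, coefA k != 0 &
                      ~~ [forall j : 'I_m.+1, gamma k j == gamma k ord0]]].
End Defs.

(* Main.v *)
Require Import Defs.
From HB Require Import structures.
From mathcomp Require Import all_boot all_order all_algebra.
From mathcomp Require Import boolp classical_sets cardinality.
From mathcomp Require Import ring lra.
Set Implicit Arguments. Unset Strict Implicit. Unset Printing Implicit Defensive.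
Import Order.TTheory GRing.Theory Num.Theory.
Local Open Scope ring_scope.
Local Open Scope classical_set_scope.

Lemma sc_refl (R : realFieldType) s m (alpha beta : 'I_s.+1 -> 'I_m.+1 -> nat)
  (c : 'I_s -> R) i : same_class alpha beta c i i.
Proof. rewrite /same_class; case: ifP => H; [by rewrite H eqxx | exact: negbFE]. Qed.

Lemma sc_A (R : realFieldType) s m (alpha beta : 'I_s.+1 -> 'I_m.+1 -> nat)
  (c : 'I_s -> R) i k : same_class alpha beta c i k ->
  (coefA R alpha beta i != 0) = (coefA R alpha beta k != 0).
Proof.
rewrite /same_class; case Hi: (coefA R alpha beta i != 0).
  by case/andP => ->.
by move=> ->.
Qed.

Lemma sc_sym (R : realFieldType) s m (alpha beta : 'I_s.+1 -> 'I_m.+1 -> nat)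
  (c : 'I_s -> R) i k : same_class alpha beta c i k -> same_class alpha beta c k i.
Proof.
move=> H; have E := sc_A H; move: H; rewrite /same_class -E.
case Hi: (coefA R alpha beta i != 0).
  by case/andP => _ /eqP ->; rewrite eqxx.
by move=> _; apply: negbFE.
Qed.

Lemma sc_trans (R : realFieldType) s m (alpha beta : 'I_s.+1 -> 'I_m.+1 -> nat)
  (c : 'I_s -> R) i k l : same_class alpha beta c i k -> same_class alpha beta c k l ->
  same_class alpha beta c i l.
Proof.
move=> H1 H2; have E1 := sc_A H1; have E2 := sc_A H2; move: H1 H2.
rewrite /same_class -E1.
case Hi: (coefA R alpha beta i != 0) => //.
by move=> /andP[_ /eqP e1] /andP[Hl /eqP e2]; rewrite Hl e2 e1 eqxx.
Qed.

Definition rep (R : realFieldType) s m (alpha beta : 'I_s.+1 -> 'I_m.+1 -> nat)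
  (c : 'I_s -> R) (i : 'I_s.+1) : 'I_s.+1 :=
  [arg min_(k < i | same_class alpha beta c i k) (k : nat)].

Lemma rep_spec (R : realFieldType) s m (alpha beta : 'I_s.+1 -> 'I_m.+1 -> nat)
  (c : 'I_s -> R) i : same_class alpha beta c i (rep alpha beta c i) /\
  forall k, same_class alpha beta c i k -> (rep alpha beta c i <= k)%N.
Proof.
rewrite /rep; case: arg_minnP; first exact: sc_refl.
by move=> k Hk Hmin; split.
Qed.

Lemma rep_eq (R : realFieldType) s m (alpha beta : 'I_s.+1 -> 'I_m.+1 -> nat)
  (c : 'I_s -> R) i k : same_class alpha beta c i k ->
  rep alpha beta c i = rep alpha beta c k.
Proof.
move=> H; have [Si Mi] := rep_spec alpha beta c i.
have [Sk Mk] := rep_spec alpha beta c k.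
apply: val_inj; apply/eqP; rewrite eqn_leq.
rewrite Mi ?(sc_trans H Sk) //.
by rewrite Mk // (sc_trans (sc_sym H) Si).
Qed.

Lemma rep_is_rep (R : realFieldType) s m (alpha beta : 'I_s.+1 -> 'I_m.+1 -> nat)
  (c : 'I_s -> R) i : is_rep alpha beta c (rep alpha beta c i).
Proof.
have [Si Mi] := rep_spec alpha beta c i.
apply/forallP => x; apply/implyP => Hx; apply: Mi; exact: sc_trans Si Hx.
Qed.

Lemma bigmin_le (I : eqType) (r : seq I) (F : I -> nat) a j : j \in r ->
  (\big[minn/a]_(i <- r) F i <= F j)%N.
Proof.
elim: r => // x r IH; rewrite inE big_cons => /orP[/eqP ->|/IH H].
  exact: geq_minl.
exact: leq_trans (geq_minr _ _) H.
Qed.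

Lemma class_const (R : realFieldType) s m (alpha beta : 'I_s.+1 -> 'I_m.+1 -> nat)
  (c : 'I_s -> R) (HH : Hset alpha beta c = finset.set0) k :
  is_rep alpha beta c k -> coefA R alpha beta k != 0 ->
  forall j, class_sum alpha beta c k j = class_sum alpha beta c k ord0.
Proof.
move=> Hr HA j.
have : k \notin Hset alpha beta c by rewrite HH inE.
rewrite inE Hr HA /= negbK => /forallP /(_ j) /eqP.
have Hle : forall j', (phi alpha beta c k <= class_sum alpha beta c k j')%N.
  move=> j'; rewrite /phi; apply: bigmin_le; exact: mem_index_enum.
rewrite /gamma => E.
by rewrite -(subnK (Hle j)) -(subnK (Hle ord0)) E.
Qed.
Lemma prod_const (R : realFieldType) s m (alpha beta : 'I_s.+1 -> 'I_m.+1 -> nat)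
  (c : 'I_s -> R) (HH : Hset alpha beta c = finset.set0) (g : 'I_s.+1 -> R) :
  (forall k, coefA R alpha beta k = 0 -> g k = 1) ->
  (forall i k, coefA R alpha beta i != 0 -> same_class alpha beta c i k -> g k = g i) ->
  forall j, \prod_k g k ^+ alpha k j = \prod_k g k ^+ alpha k ord0.
Proof.
move=> Hg0 Hgc.
pose P k := coefA R alpha beta k != 0.
pose S k' j := (\sum_(k | P k && (rep alpha beta c k == k')) alpha k j)%N.
have E : forall j, \prod_k g k ^+ alpha k j = \prod_k' g k' ^+ S k' j.
  move=> j; rewrite (bigID P) /= [X in _ * X]big1 ?mulr1; last first.
    by move=> k /negbNE/eqP /Hg0 ->; rewrite expr1n.
  rewrite (partition_big (rep alpha beta c) xpredT) //=.
  apply: eq_bigr => k' _; rewrite -prodrXr; apply: eq_bigr => k /andP[Pk /eqP <-].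
  have [Sk _] := rep_spec alpha beta c k.
  by rewrite (Hgc _ _ Pk Sk).
move=> j; rewrite !E; apply: eq_bigr => k' _; congr (_ ^+ _).
case: (boolP [exists k0, P k0 && (rep alpha beta c k0 == k')]).
  case/existsP => k0 /andP[P0 /eqP R0].
  have [S0 _] := rep_spec alpha beta c k0.
  have Pk' : coefA R alpha beta k' != 0 by rewrite /P -R0 -(sc_A S0).
  have Eq : forall k, (P k && (rep alpha beta c k == k')) = same_class alpha beta c k' k.
    move=> k; apply/idP/idP.
      case/andP => _ /eqP <-; have [Sk _] := rep_spec alpha beta c k.
      exact: sc_sym.
    move=> Hk; rewrite /P -(sc_A Hk) Pk' /=.
    rewrite -R0; apply/eqP; symmetry; apply: rep_eq.
    by apply: sc_trans S0 _; rewrite R0.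
  rewrite /S !(eq_bigl _ _ Eq).
  have := class_const HH (rep_is_rep alpha beta c k0) .
  rewrite R0 => /(_ Pk') Hc.
  by have := Hc j; rewrite /class_sum.
move=> Hn; rewrite /S !big1 //; move=> k Hk; exfalso; move/negP: Hn; apply;
by apply/existsP; exists k.
Qed.

Lemma x0_affine (R : realFieldType) s m (alpha beta : 'I_s.+1 -> 'I_m.+1 -> nat)
  (c : 'I_s -> R) (H11 : stoich R alpha beta ord0 ord0 != 0) x :
  in_Pc alpha beta c x ->
  forall k, x k = coefA R alpha beta k * x ord0 + Defs.coefB alpha beta c k.
Proof.
case=> _ Hc k; rewrite /coefA /Defs.coefB.
case: unliftP => [i ->|->]; last by rewrite eqxx mul1r addr0.
rewrite eq_sym (negbTE (neq_lift ord0 i)).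
rewrite -(Hc i); field; exact: H11.
Qed.

Theorem lemma5p10 (R : realFieldType) (s m : nat)
  (alpha beta : 'I_s.+1 -> 'I_m.+1 -> nat)
  (Hreact : forall j : 'I_m.+1, exists i : 'I_s.+1, alpha i j <> beta i j)
  (Hdim : \rank (stoich R alpha beta) = 1%N)
  (H11 : stoich R alpha beta ord0 ord0 != 0)
  (cstar : 'I_s -> R)
  (HH : Hset alpha beta cstar = finset.set0)
  (kappa : 'I_m.+1 -> R) (Hkappa : forall j, 0 < kappa j) :
  let PSS := [set x : 'I_s.+1 -> R |
               in_Pc alpha beta cstar x /\ positive_steady_state alpha beta kappa x] in
  PSS = set0 \/ infinite_set PSS.
Proof.
move=> PSS.
case: (pselect (exists x, PSS x)) => [[x0 [Pc0 [Pos0 SS0]]]|Hn]; last first.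
  by left; apply/seteqP; split => x // Hx; apply: Hn; exists x.
right.
pose A k := coefA R alpha beta k.
pose w k := A k / x0 k.
pose M := 1 + \sum_k `|w k|.
have M1 : 1 <= M by rewrite /M lerDl sumr_ge0.
pose d (n : nat) := (M * n.+1%:R)^-1.
have dpos : forall n, 0 < d n.
  move=> n; rewrite /d invr_gt0 mulr_gt0 //; lra.
have dM : forall n, d n * M <= 1.
  move=> n; rewrite /d invfM mulrAC mulVf; last by apply/eqP => E; move: M1; rewrite E; lra.
  rewrite mul1r invf_le1 ?ler1n ?ltr0n //.
pose xn (n : nat) := fun k => x0 k * (1 + w k * d n).
have qpos : forall n k, 0 < 1 + w k * d n.
  move=> n k.
  have h1 : `|w k| <= \sum_k `|w k|.
    rewrite (bigD1 k) //=.
    have hs : 0 <= \sum_(i | i != k) `|w i| by apply: sumr_ge0 => i _; exact: normr_ge0.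
    lra.
  have h2 : - w k <= `|w k| by rewrite -normrN ler_norm.
  have := dpos n; have := dM n; rewrite /M in h1 *; nra.
have x0nz : forall k, x0 k != 0 by move=> k; rewrite gt_eqF.
have xnE : forall n k, xn n k = x0 k + A k * d n.
  move=> n k; rewrite /xn /w; field; exact: x0nz.
have A0 : A ord0 = 1 by rewrite /A /coefA eqxx.
have aff := x0_affine H11 Pc0.
have inP : forall n, PSS (xn n).
  move=> n; split; [split|split].
  - by move=> k; rewrite /xn ltW // mulr_gt0.
  - move=> i; rewrite !xnE A0 /A /coefA eq_sym (negbTE (neq_lift ord0 i)).
    case: Pc0 => _ /(_ i) <-; field; exact: H11.
  - by move=> k; rewrite /xn mulr_gt0.
  - move=> i.
    have Hq := @prod_const R s m alpha beta cstar HH (fun k => 1 + w k * d n).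
    have Hq' : forall j, \prod_k (1 + w k * d n) ^+ alpha k j = \prod_k (1 + w k * d n) ^+ alpha k ord0.
      apply: Hq.
        by move=> k Ak /=; rewrite /w /A /= Ak mul0r mul0r addr0.
      move=> i' k Ai Hs; congr (1 + _ * _).
      have Ak : A k != 0 by rewrite /A -(sc_A Hs).
      rewrite /w -[A k]invrK -[A i']invrK -!invfM; congr (_^-1).
      rewrite (aff k) (aff i') !mulrDr !mulrA !mulVf //.
      move: Hs; rewrite /same_class Ai => /andP[_ /eqP Hr].
      by rewrite ![_^-1 * Defs.coefB _ _ _ _]mulrC Hr.
    rewrite /ma_field.
    transitivity (\prod_k (1 + w k * d n) ^+ alpha k ord0 * ma_field alpha beta kappa x0 i); last by rewrite SS0 mulr0.
    rewrite /ma_field mulr_sumr; apply: eq_bigr => j _.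
    rewrite /xn /=; under eq_bigr do rewrite exprMn.
    rewrite big_split /= Hq'; ring.
apply/infiniteP.
have inj : injective xn.
  move=> n1 n2 /(congr1 (fun f => f ord0)); rewrite !xnE A0 !mul1r => /addrI.
  rewrite /d => /invr_inj /(mulfI _) E.
  have : M != 0 by apply/eqP => E'; move: M1; rewrite E'; lra.
  move/E => /eqP; rewrite eqr_nat => /eqP [].
  done.
have := @card_ge_preimage nat _ PSS xn (fun a b _ _ => @inj a b).
suff -> : xn @^-1` PSS = [set: nat] by [].
by apply/seteqP; split => n // _; exact: inP.
Qed.
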